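(* Let $n,m$ be positive integers with $m+2\le n$, and let $\tilde{\mathcal I}$ be the family of non-empty independent sets $I$ of $P_n^m$ with $\min I\leq m+1$ and $\max I\geq n-m$. For every $I\in\tilde{\mathcal I}$, $\gamma_{gr}(P_n^m,I)=\max I-\min I+1-(|I|-1)m$. Moreover, for every non-empty independent set $I$ of $P_n^m$ there exists $I'\in\tilde{\mathcal I}$ such that $\gamma_{gr}(P_n^m,I)\leq\gamma_{gr}(P_n^m,I')$.
   Context: $P_n^m$ is the $m$-th power of the path $P_n$: vertex set $[n]=\{1,\dots,n\}$, distinct $i,j$ adjacent iff $|i-j|\le m$. For a sequence $S=(v_1,\dots,v_k)$ of distinct vertices, $PN_S(v_i)=N[v_i]\setminus\bigcup_{j<i}N[v_j]$ ($N[\cdot]$ the closed neighborhood). $S$ is a legal dominating sequence if $\{v_1,\dots,v_k\}$ is dominating and each $PN_S(v_i)\ne\emptyset$. For such $S$ the footprinter $f_S(x)$ of a vertex $x$ is the unique $v_i$ with $x\in PN_S(v_i)$, and $I_S=\{v:f_S(v)=v\}$. For an independent set $I$, $\gamma_{gr}(G,I)$ is the maximum length of a legal dominating sequence $S$ of $G$ with $I_S=I$ ($-\infty$ if there is none). *)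

(* Defs.v *)
(* Vertices of P_n^m are the naturals 1..n. *)
From mathcomp Require Import all_boot.
Set Implicit Arguments. Unset Strict Implicit. Unset Printing Implicit Defensive.

Definition vert (n : nat) : seq nat := iota 1 n.
Definition is_vert (n x : nat) : bool := (1 <= x) && (x <= n).

Definition adj (m i j : nat) : bool := (i != j) && (i - j <= m) && (j - i <= m).

Definition inN (n m v x : nat) : bool := is_vert n x && ((x == v) || adj m v x).

(* x \in PN_S(v_i) = N[v_i] \ \bigcup_{j<i} N[v_j]  (i is a 0-based index) *)
Definition inPN (n m : nat) (S : seq nat) (i x : nat) : bool :=
  inN n m (nth 0 S i) x && ~~ has (fun v => inN n m v x) (take i S).

Definition dominating (n m : nat) (S : seq nat) : bool :=
  all (fun x => has (fun v => inN n m v x) S) (vert n).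

Definition legal (n m : nat) (S : seq nat) : bool :=
  [&& uniq S, all (is_vert n) S, dominating n m S &
      all (fun i => has (inPN n m S i) (vert n)) (iota 0 (size S))].

Definition footprinter (n m : nat) (S : seq nat) (x : nat) : nat :=
  nth 0 S (find (fun i => inPN n m S i x) (iota 0 (size S))).

Definition inIS (n m : nat) (S : seq nat) (v : nat) : bool :=
  is_vert n v && (footprinter n m S v == v).

(* I_S = I as sets (I a sequence of vertices representing a set) *)
Definition IS_eq (n m : nat) (S I : seq nat) : bool :=
  all (is_vert n) I && all (fun v => inIS n m S v == (v \in I)) (vert n).

Fixpoint arrangements (k : nat) (s : seq nat) : seq (seq nat) :=
  [::] :: (if k is k'.+1 then
             flatten [seq [seq x :: t | t <- arrangements k' (rem x s)] | x <- s]
           else [::]).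

(* gamma_gr(P_n^m, I); None encodes -infinity *)
Definition gamma_gr (n m : nat) (I : seq nat) : option nat :=
  let L := [seq size s | s <- arrangements n (vert n) & legal n m s && IS_eq n m s I] in
  if L is [::] then None else Some (\max_(k <- L) k).

Definition le_ext (a b : option nat) : bool :=
  match a, b with
  | None, _ => true
  | Some _, None => false
  | Some x, Some y => x <= y
  end.

Definition independent (n m : nat) (I : seq nat) : bool :=
  [&& uniq I, all (is_vert n) I &
      all (fun i => all (fun j => ~~ adj m i j) I) I].

Definition seq_max (I : seq nat) : nat := \max_(i <- I) i.
Definition seq_min (I : seq nat) : nat := foldr minn (head 0 I) I.

Definition in_tildeI (n m : nat) (I : seq nat) : bool :=
  [&& independent n m I, I != [::], seq_min I <= m.+1 & n - m <= seq_max I].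

(* Main.v *)
Require Import Defs.
From mathcomp Require Import all_boot zify.
Set Implicit Arguments. Unset Strict Implicit. Unset Printing Implicit Defensive.

Ltac prep_arith := repeat match goal with
 | H : is_true (leq _ _) |- _ => revert H
 | H : is_true (~~ _) |- _ => revert H
 | H : @eq _ _ _ |- _ => revert H
 end.
Ltac clear_props := repeat match goal with H : ?T |- _ => lazymatch type of T with Prop => clear H end end.
Ltac slia := prep_arith; clear_props; intros; lia.


Lemma inNE n m v x : inN n m v x = [&& 0 < x, x <= n, v - x <= m & x - v <= m].
Proof.
rewrite /inN /is_vert /adj.
case: (x =P v) => [->|ne] /=.
  by rewrite subnn andbT; case: (0 < v); case: (v <= n).
have -> : (v != x) by apply/eqP => e; apply: ne.
by rewrite /= -!andbA.
Qed.

Lemma is_vertE n x : is_vert n x = (0 < x) && (x <= n).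
Proof. by []. Qed.

Lemma mem_vert n x : (x \in vert n) = (0 < x) && (x <= n).
Proof. rewrite /vert mem_iota; slia. Qed.

Definition dom n m (S : seq nat) k y := has (fun u => inN n m u y) (take k S).

Lemma domP n m S k y : reflect (exists2 u, u \in S & (index u S < k) && inN n m u y) (dom n m S k y).
Proof.
apply: (iffP hasP) => [[u uin h]|[u uin /andP[h1 h2]]].
  have uS : u \in S by apply: mem_take uin.
  by exists u => //; rewrite -in_take // uin h.
by exists u => //; rewrite in_take.
Qed.

Lemma inPNE n m S i x : inPN n m S i x = inN n m (nth 0 S i) x && ~~ dom n m S i x.
Proof. by []. Qed.

Lemma inPN_uniq n m S i j x : i < size S -> j < size S ->
  inPN n m S i x -> inPN n m S j x -> i = j.
Proof.
move=> hi hj.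
wlog lt: i j hi hj / i < j.
  move=> H h1 h2; case: (ltngtP i j) => c; [exact: H|symmetry; exact: H|by []].
rewrite /inPN => /andP[h1 _] /andP[_ h2].
case/negP: h2; apply/hasP; exists (nth 0 S i) => //.
rewrite -{1}(cat_take_drop j S) nth_cat size_take hj lt.
by apply: mem_nth; rewrite size_take hj.
Qed.

Definition idx n m S x := find (fun i => inPN n m S i x) (iota 0 (size S)).

Lemma fpE n m S x : footprinter n m S x = nth 0 S (idx n m S x).
Proof. by []. Qed.

Lemma fp_eq n m S v y : uniq S -> v \in S -> 0 < v ->
  (footprinter n m S y == v) = inPN n m S (index v S) y.
Proof.
move=> uS vS v0.
have iv : index v S < size S by rewrite index_mem.
apply/idP/idP.
- rewrite fpE /idx => /eqP h.
  set P := (fun i => inPN n m S i y) in h *.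
  have hs : has P (iota 0 (size S)).
    rewrite has_find size_iota ltnNge; apply/negP => c.
    by move: h; rewrite nth_default // => e; rewrite -e in v0.
  have := nth_find 0 hs; rewrite -/P.
  move: hs; rewrite has_find size_iota => hs.
  rewrite nth_iota // add0n => hP.
  have -> : index v S = find P (iota 0 (size S)) by rewrite -h index_uniq.
  exact: hP.
- move=> hP; rewrite fpE /idx.
  set P := (fun i => inPN n m S i y).
  have hs : has P (iota 0 (size S)).
    by apply/hasP; exists (index v S) => //; rewrite mem_iota.
  have := nth_find 0 hs; move: hs; rewrite has_find size_iota => hs.
  rewrite nth_iota // add0n => hP2.
  rewrite (inPN_uniq hs iv hP2 hP) nth_index //.
Qed.


Lemma legal_uniq n m S : legal n m S -> uniq S.
Proof. by case/and4P. Qed.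
Lemma legal_vert n m S : legal n m S -> forall u, u \in S -> (0 < u) && (u <= n).
Proof. by case/and4P => _ /allP h _ _ u /h. Qed.
Lemma legal_dom n m S : legal n m S -> forall x, 0 < x -> x <= n -> has (fun v => inN n m v x) S.
Proof. by case/and4P => _ _ /allP h _ x x0 xn; apply: h; rewrite mem_vert x0. Qed.
Lemma legal_pn n m S : legal n m S -> forall u, u \in S -> has (inPN n m S (index u S)) (vert n).
Proof.
case/and4P => _ _ _ /allP h u uS; apply: h; rewrite mem_iota add0n /=.
by rewrite index_mem.
Qed.

Lemma ISeq_vert n m S I : IS_eq n m S I -> forall v, v \in I -> (0 < v) && (v <= n).
Proof. by case/andP => /allP h _ v /h. Qed.

Lemma ISeq_fp n m S I : IS_eq n m S I -> forall v, 0 < v -> v <= n ->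
  (footprinter n m S v == v) = (v \in I).
Proof.
case/andP => _ /allP h v v0 vn.
have := h v; rewrite mem_vert v0 vn => /(_ isT) /eqP <-.
by rewrite /inIS is_vertE v0 vn.
Qed.

Lemma F1 n m S I : legal n m S -> IS_eq n m S I -> forall v, v \in I ->
  v \in S /\ ~~ dom n m S (index v S) v.
Proof.
move=> hL hI v vI.
have /andP[v0 vn] := ISeq_vert hI vI.
have := ISeq_fp hI v0 vn; rewrite vI => hf.
have vS : v \in S.
  move/eqP: hf; rewrite fpE => e.
  case: (ltnP (idx n m S v) (size S)) => c.
    by rewrite -e mem_nth.
  by move: e; rewrite nth_default // => e; rewrite -e in v0.
split=> //.
move: hf; rewrite fp_eq //; last exact: legal_uniq hL.
by case/andP.
Qed.

Lemma F2 n m S I : legal n m S -> IS_eq n m S I -> forall x, x \in S -> x \notin I ->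
  dom n m S (index x S) x.
Proof.
move=> hL hI x xS xI.
have /andP[x0 xn] := legal_vert hL xS.
case nd: (dom n m S (index x S) x) => //.
have : footprinter n m S x == x.
  rewrite fp_eq //; last exact: legal_uniq hL.
  rewrite inPNE nth_index // nd andbT inNE x0 xn subnn //.
by rewrite (ISeq_fp hI) // (negbTE xI).
Qed.

Definition consec (I : seq nat) a b := forall c, c \in I -> a < c -> c < b -> False.

Lemma gapB n m S I a b : legal n m S -> IS_eq n m S I -> a \in I -> b \in I ->
  consec I a b ->
  forall u, u \in S -> a < u -> u < b -> index u S < index a S -> index u S < index b S -> False.
Proof.
move=> hL hI aI bI hc u.
have [k] := ubnP (index u S); elim: k u => // k IH u ltk uS au ub ta tb.
have uI : u \notin I by apply/negP => uI; apply: (hc u).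
have /domP [w wS /andP[tw inw]] := F2 hL hI uS uI.
have [aS nda] := F1 hL hI aI.
have [bS ndb] := F1 hL hI bI.
move: inw; rewrite inNE => /and4P[_ _ h1 h2].
case: (ltnP a w) => aw; case: (ltnP w b) => wb.
- apply: (IH w) => //; [slia|slia|slia].
- case/negP: ndb; apply/domP; exists w => //.
  have /andP[w0 wn] := legal_vert hL wS.
  have /andP[b0 bn] := ISeq_vert hI bI.
  rewrite inNE b0 bn; apply/and3P; split; slia.
- case/negP: nda; apply/domP; exists w => //.
  have /andP[w0 wn] := legal_vert hL wS.
  have /andP[a0 an] := ISeq_vert hI aI.
  rewrite inNE a0 an; apply/and3P; split; slia.
- slia.
Qed.


Lemma fp_in n m S I a y : legal n m S -> IS_eq n m S I -> a \in I ->
  inPN n m S (index a S) y -> footprinter n m S y \in I.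
Proof.
move=> hL hI aI h.
have [aS _] := F1 hL hI aI.
have /andP[a0 _] := ISeq_vert hI aI.
by have := h; rewrite -fp_eq //; [move/eqP ->|exact: legal_uniq hL].
Qed.


Lemma zoneL n m S I a b : legal n m S -> IS_eq n m S I -> a \in I -> b \in I ->
  consec I a b -> a < b -> index a S < index b S ->
  forall y, a < y -> y <= a + m -> y < b -> footprinter n m S y \in I.
Proof.
move=> hL hI aI bI hc ab tab y ay ym yb.
apply: (fp_in hL hI aI).
have [aS nda] := F1 hL hI aI.
have [bS ndb] := F1 hL hI bI.
have /andP[a0 an] := ISeq_vert hI aI.
have /andP[b0 bn] := ISeq_vert hI bI.
rewrite inPNE nth_index // inNE; apply/andP; split.
  apply/and4P; split; slia.
apply/domP => -[w wS /andP[tw]]; rewrite inNE => /and4P[_ _ h1 h2].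
have /andP[w0 wn] := legal_vert hL wS.
case: (ltnP a w) => aw; case: (ltnP w b) => wb.
- by apply: (gapB hL hI aI bI hc wS) => //; slia.
- case/negP: ndb; apply/domP; exists w => //.
  rewrite inNE b0 bn; apply/and3P; split; slia.
- case/negP: nda; apply/domP; exists w => //.
  rewrite inNE a0 an; apply/and3P; split; slia.
- slia.
Qed.

Lemma zoneR n m S I a b : legal n m S -> IS_eq n m S I -> a \in I -> b \in I ->
  consec I a b -> a < b -> index b S < index a S ->
  forall y, a < y -> b <= y + m -> y < b -> footprinter n m S y \in I.
Proof.
move=> hL hI aI bI hc ab tab y ay ym yb.
apply: (fp_in hL hI bI).
have [aS nda] := F1 hL hI aI.
have [bS ndb] := F1 hL hI bI.
have /andP[a0 an] := ISeq_vert hI aI.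
have /andP[b0 bn] := ISeq_vert hI bI.
rewrite inPNE nth_index // inNE; apply/andP; split.
  apply/and4P; split; slia.
apply/domP => -[w wS /andP[tw]]; rewrite inNE => /and4P[_ _ h1 h2].
have /andP[w0 wn] := legal_vert hL wS.
case: (ltnP a w) => aw; case: (ltnP w b) => wb.
- by apply: (gapB hL hI aI bI hc wS) => //; slia.
- case/negP: ndb; apply/domP; exists w => //.
  rewrite inNE b0 bn; apply/and3P; split; slia.
- case/negP: nda; apply/domP; exists w => //.
  rewrite inNE a0 an; apply/and3P; split; slia.
- slia.
Qed.

Lemma extL n m S I a : legal n m S -> IS_eq n m S I -> a \in I -> a <= m.+1 ->
  forall y, 0 < y -> y < a -> footprinter n m S y \in I.
Proof.
move=> hL hI aI am y y0 ya.
apply: (fp_in hL hI aI).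
have [aS nda] := F1 hL hI aI.
have /andP[a0 an] := ISeq_vert hI aI.
rewrite inPNE nth_index // inNE; apply/andP; split.
  apply/and4P; split; slia.
apply/domP => -[w wS /andP[tw]]; rewrite inNE => /and4P[_ _ h1 h2].
have /andP[w0 wn] := legal_vert hL wS.
case/negP: nda; apply/domP; exists w => //.
rewrite inNE a0 an; apply/and3P; split; slia.
Qed.

Lemma extR n m S I a : legal n m S -> IS_eq n m S I -> a \in I -> n <= a + m ->
  forall y, a < y -> y <= n -> footprinter n m S y \in I.
Proof.
move=> hL hI aI am y y0 ya.
apply: (fp_in hL hI aI).
have [aS nda] := F1 hL hI aI.
have /andP[a0 an] := ISeq_vert hI aI.
rewrite inPNE nth_index // inNE; apply/andP; split.
  apply/and4P; split; slia.
apply/domP => -[w wS /andP[tw]]; rewrite inNE => /and4P[_ _ h1 h2].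
have /andP[w0 wn] := legal_vert hL wS.
case/negP: nda; apply/domP; exists w => //.
rewrite inNE a0 an; apply/and3P; split; slia.
Qed.

Lemma selfI n m S I a : legal n m S -> IS_eq n m S I -> a \in I -> footprinter n m S a \in I.
Proof.
move=> hL hI aI; have /andP[a0 an] := ISeq_vert hI aI.
by have := ISeq_fp hI a0 an; rewrite aI => /eqP ->.
Qed.


Definition gsel n m S v := nth 0 (vert n) (find (inPN n m S (index v S)) (vert n)).

Lemma gsel_prop n m S v : legal n m S -> v \in S ->
  gsel n m S v \in vert n /\ footprinter n m S (gsel n m S v) = v.
Proof.
move=> hL vS.
have hh := legal_pn hL vS.
have hin := nth_find 0 hh.
split; first by rewrite /gsel mem_nth // -has_find.
have /andP[v0 _] := legal_vert hL vS.
by apply/eqP; rewrite fp_eq //; exact: legal_uniq hL.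
Qed.

Lemma count_bound n m S J : legal n m S -> uniq J ->
  size S <= size J + count (fun x => footprinter n m S x \notin J) (vert n).
Proof.
move=> hL uJ.
rewrite -(count_predC (mem J) S); apply: leq_add.
  rewrite -size_filter; apply: uniq_leq_size; first by rewrite filter_uniq // (legal_uniq hL).
  by move=> x; rewrite mem_filter => /andP[].
rewrite -size_filter -(size_map (gsel n m S)) -size_filter.
apply: uniq_leq_size.
  rewrite map_inj_in_uniq; first by rewrite filter_uniq // (legal_uniq hL).
  move=> u v; rewrite !mem_filter => /andP[_ uS] /andP[_ vS] e.
  have [_ <-] := gsel_prop hL uS; have [_ <-] := gsel_prop hL vS.
  by rewrite e.
move=> x /mapP[v]; rewrite mem_filter => /andP[vJ vS] ->.
have [h1 h2] := gsel_prop hL vS.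
by rewrite mem_filter h2 h1 andbT.
Qed.


Lemma count_sub_iota (P : pred nat) a L b l : a <= b -> b + l <= a + L ->
  count P (iota b l) <= count P (iota a L).
Proof.
move=> ab bl.
have -> : L = (b - a) + (l + (a + L - (b + l))) by slia.
rewrite iotaD iotaD !count_cat; have -> : a + (b - a) = b by slia.
slia.
Qed.

Lemma count_full_iota (P : pred nat) b l : (forall x, b <= x -> x < b + l -> P x) ->
  count P (iota b l) = l.
Proof.
move=> h; have : all P (iota b l).
  by apply/allP => x; rewrite mem_iota => /andP[h1 h2]; apply: h.
by rewrite all_count size_iota => /eqP.
Qed.

Lemma count_inN n m v : 0 < v -> v <= n -> m < n -> m.+1 <= count (inN n m v) (vert n).
Proof.
move=> v0 vn mn; rewrite /vert.
case: (leqP (v + m) n) => c.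
  rewrite -{1}(count_full_iota (P := inN n m v) (b := v) (l := m.+1)).
    by apply: count_sub_iota; slia.
  by move=> x h1 h2; rewrite inNE; apply/and4P; split; slia.
rewrite -{1}(count_full_iota (P := inN n m v) (b := n - m) (l := m.+1)).
  by apply: count_sub_iota; slia.
by move=> x h1 h2; rewrite inNE; apply/and4P; split; slia.
Qed.

Lemma U1 n m S : legal n m S -> m < n -> size S <= n - m.
Proof.
move=> hL mn.
case: S hL => [|v0 S'] hL; first by [].
have := count_bound hL (J := [:: v0]) isT.
have vS : v0 \in v0 :: S' by rewrite inE eqxx.
have /andP[v0p v0n] := legal_vert hL vS.
have h1 := count_inN v0p v0n mn.
have h2 : count (inN n m v0) (vert n) <= count (fun x => footprinter n m (v0 :: S') x == v0) (vert n).
  apply: sub_count => x hx /=.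
  rewrite fp_eq //; last exact: legal_uniq hL.
  by rewrite /= eqxx inPNE /dom /= hx.
have h3 := count_predC (fun x => footprinter n m (v0 :: S') x == v0) (vert n).
have : count (fun x => footprinter n m (v0 :: S') x \notin [:: v0]) (vert n) =
       count (predC (fun x => footprinter n m (v0 :: S') x == v0)) (vert n).
  by apply: eq_count => x; rewrite /= inE.
rewrite /vert size_iota in h1 h2 h3 * => ->.
rewrite /=; slia.
Qed.


Lemma foldr_minn_prop d s : [/\ (foldr minn d s == d) || (foldr minn d s \in s),
  foldr minn d s <= d & forall c, c \in s -> foldr minn d s <= c].
Proof.
elim: s => [|x s [IH1 IH2 IH3]] /=; first by rewrite eqxx.
split.
- rewrite inE; case: (leqP x (foldr minn d s)) => c.
    by rewrite eqxx orbT.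
  by case/orP: IH1 => ->; rewrite ?orbT.
- by rewrite geq_min IH2 orbT.
- move=> c; rewrite inE => /orP[/eqP ->|cs]; first by rewrite geq_min leqnn.
  by rewrite geq_min IH3 ?orbT.
Qed.

Lemma seq_min_prop I : I != [::] -> seq_min I \in I /\ forall c, c \in I -> seq_min I <= c.
Proof.
case: I => [//|x s] _; rewrite /seq_min /=.
have [h1 h2 h3] := foldr_minn_prop x s.
split.
  rewrite inE; case: (leqP x (foldr minn x s)) => c; first by rewrite eqxx.
  by case/orP: h1 => [/eqP e|->]; [slia|rewrite orbT].
move=> c; rewrite inE => /orP[/eqP ->|cs]; first by rewrite geq_min leqnn.
by rewrite geq_min h3 ?orbT.
Qed.

Lemma seq_max_prop I : I != [::] -> seq_max I \in I /\ forall c, c \in I -> c <= seq_max I.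
Proof.
move=> ne; split; last by move=> c cI; rewrite /seq_max (leq_bigmax_seq (F := id) c cI).
rewrite /seq_max; elim: I ne => [//|x s IH] _.
rewrite big_cons inE; case: s IH => [|y s] IH.
  by rewrite big_nil maxn0 eqxx.
have /(_ isT) := IH; set M := \max_(i <- _) i => hM.
case: (leqP x M) => c; first by rewrite hM orbT.
by rewrite eqxx.
Qed.

Lemma indep_far n m I : independent n m I -> forall a b, a \in I -> b \in I -> a < b -> a + m < b.
Proof.
case/and3P => _ _ /allP h a b aI bI ab.
have /allP := h a aI => /(_ b bI); rewrite /adj.
have -> : (a != b) by rewrite neq_ltn ab.
move=> /=; slia.
Qed.

Lemma Gs m (P : pred nat) (I : seq nat) hi :
  (forall a, a \in I -> P a) ->
  (forall a b, a \in I -> b \in I -> a < b -> consec I a b ->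
     (forall y, a < y -> y <= a + m -> y < b -> P y) \/
     (forall y, a < y -> b <= y + m -> y < b -> P y)) ->
  (forall a b, a \in I -> b \in I -> a < b -> a + m < b) ->
  hi \in I -> (forall c, c \in I -> c <= hi) ->
  forall s x, path ltn x s -> x \in I -> all (mem I) s ->
    (forall c, c \in I -> x <= c -> c \in x :: s) ->
    (size s).+1 + size s * m <= count P (iota x (hi - x + 1)).
Proof.
move=> hP hZ hF hiI hhi; elim=> [|y s IH] x /=.
  move=> _ xI _ hc.
  have xh := hhi x xI.
  have := hc hi hiI xh; rewrite inE => /eqP ->.
  by rewrite subnn /= hP.
case/andP=> xy py xI /andP[yI alls] hc.
have yhi := hhi y yI.
have -> : hi - x + 1 = (y - x) + (hi - y + 1) by slia.
rewrite iotaD count_cat.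
have -> : x + (y - x) = y by slia.
have IH' := IH y py yI alls.
have minp := order_path_min ltn_trans py.
have : (size s).+1 + size s * m <= count P (iota y (hi - y + 1)).
  apply: IH' => c cI yc.
  have := hc c cI (ltnW (leq_trans xy yc)); rewrite !inE.
  by case/orP => [/eqP e|//]; slia.
move=> h2.
have con : consec I x y.
  move=> c cI xc cy.
  have := hc c cI (ltnW xc); rewrite !inE => /or3P[/eqP e|/eqP e|cs]; try slia.
  by have /allP := minp => /(_ c cs) /=; slia.
have h1 : 1 + m <= count P (iota x (y - x)).
  have -> : y - x = (y - x - 1).+1 by slia.
  rewrite /= hP //= add1n ltnS.
  have hf := hF x y xI yI xy.
  case: (hZ x y xI yI xy con) => hz.
    rewrite -{1}(count_full_iota (P := P) (b := x.+1) (l := m)); last first.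
      by move=> z h3 h4; apply: hz; slia.
    by apply: count_sub_iota; slia.
  rewrite -{1}(count_full_iota (P := P) (b := y - m) (l := m)); last first.
    by move=> z h3 h4; apply: hz; slia.
  by apply: count_sub_iota; slia.
rewrite /= mulSn; slia.
Qed.


Lemma sort_facts (I : seq nat) : uniq I -> I != [::] ->
  exists x s, path ltn x s /\ [/\ x \in I, all (mem I) s,
    (forall c, c \in I -> c \in x :: s), x = seq_min I & size s = (size I).-1].
Proof.
move=> uI ne.
have hs : sorted ltn (sort leq I) by rewrite ltn_sorted_uniq_leq sort_uniq uI sort_sorted //; exact: leq_total.
have [lo_in lo_min] := seq_min_prop ne.
case e: (sort leq I) hs => [|x s] hs.
  by move: (size_sort leq I); rewrite e => /esym /eqP; rewrite size_eq0 (negbTE ne).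
have memE : forall c, (c \in x :: s) = (c \in I) by move=> c; rewrite -e mem_sort.
exists x, s; split => //; split => //.
- by rewrite -memE inE eqxx.
- by apply/allP => c cs; rewrite /= -memE inE cs orbT.
- by move=> c; rewrite memE.
- have xI : x \in I by rewrite -memE inE eqxx.
  have := lo_min x xI; move: lo_in; rewrite -memE inE => /orP[/eqP -> //|los].
  have /allP := order_path_min ltn_trans hs => /(_ _ los) /=; slia.
- by move: (size_sort leq I); rewrite e /= => <-.
Qed.

Lemma U2 n m S I : legal n m S -> IS_eq n m S I -> in_tildeI n m I ->
  size S <= seq_max I - seq_min I + 1 - (size I - 1) * m.
Proof.
move=> hL hI /and4P[hind ne hlo hhi].
have uI : uniq I by case/and3P: hind.
have [lo_in lo_min] := seq_min_prop ne.
have [hi_in hi_max] := seq_max_prop ne.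
set lo := seq_min I in lo_in lo_min hlo *.
set hi := seq_max I in hi_in hi_max hhi *.
set P := fun x => footprinter n m S x \in I.
have hP : forall a, a \in I -> P a by move=> a aI; apply: selfI hL hI aI.
have hF := indep_far hind.
have hZ : forall a b, a \in I -> b \in I -> a < b -> consec I a b ->
     (forall y, a < y -> y <= a + m -> y < b -> P y) \/
     (forall y, a < y -> b <= y + m -> y < b -> P y).
  move=> a b aI bI ab hc.
  have [aS _] := F1 hL hI aI; have [bS _] := F1 hL hI bI.
  case: (ltngtP (index a S) (index b S)) => c.
  - by left; apply: zoneL hL hI aI bI hc ab c.
  - by right; apply: zoneR hL hI aI bI hc ab c.
  - by move: (nth_index 0 aS); rewrite c nth_index // => e; rewrite e ltnn in ab.
have [x [s [ps [xI alls hcs xlo ss]]]] := sort_facts uI ne.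
have hG := Gs hP hZ hF hi_in hi_max ps xI alls (fun c cI _ => hcs c cI).
rewrite xlo ss -/lo in hG.
have /andP[lo0 lon] := ISeq_vert hI lo_in.
have /andP[hi0 hin] := ISeq_vert hI hi_in.
have lohi := lo_min hi hi_in.
have hcnt : (lo - 1) + ((size I).-1.+1 + (size I).-1 * m) + (n - hi) <= count P (vert n).
  rewrite /vert.
  have e1 : n = (lo - 1) + ((hi - lo + 1) + (n - hi)) by slia.
  rewrite [X in iota 1 X]e1 iotaD iotaD !count_cat.
  have -> : 1 + (lo - 1) = lo by slia.
  have -> : lo + (hi - lo + 1) = hi.+1 by slia.
  rewrite (count_full_iota (P := P) (b := 1) (l := lo - 1)); last first.
    by move=> z h1 h2; apply: (extL hL hI lo_in) => //; slia.
  rewrite (count_full_iota (P := P) (b := hi.+1)); last first.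
    by move=> z h1 h2; apply: (extR hL hI hi_in) => //; slia.
  slia.
have hb := count_bound hL uI.
have hc := count_predC P (vert n).
have e2 : count (fun x => footprinter n m S x \notin I) (vert n) = count (predC P) (vert n) by [].
rewrite e2 /vert size_iota in hb hc hcnt.
have k0 : 0 < size I by rewrite lt0n size_eq0.
move: hb hc hcnt; set w := (size I).-1 * m.
have -> : (size I - 1) * m = w by rewrite /w subn1.
have hG2 := count_size P (iota lo (hi - lo + 1)); rewrite size_iota in hG2.
rewrite -/w prednK // in hG *.
move=> h1 h2 h3; clearbody w lo hi P.
move: hG hG2 h1 h2 h3 k0.
move: (size I) (size S) (count P (iota 1 n)) (count (predC P) (iota 1 n)) (count P (iota lo (hi - lo + 1))).
move=> *; slia.
Qed.


Lemma sorted_index_lt (S : seq nat) u x : sorted ltn S -> u \in S -> x \in S ->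
  (index u S < index x S) = (u < x).
Proof.
move=> sS uS xS; apply/idP/idP => h.
  exact: (sorted_ltn_index ltn_trans sS u x uS xS h).
case: (ltngtP (index u S) (index x S)) => // c.
  by have := sorted_ltn_index ltn_trans sS x u xS uS c; slia.
by move: (nth_index 0 uS); rewrite c nth_index // => e; rewrite e ltnn in h.
Qed.

Definition good m (I : seq nat) x := (x \in I) || ~~ has (fun c => (x < c) && (c <= x + m)) I.
Definition Sstar m I lo hi := filter (good m I) (iota lo (hi - lo + 1)).

Lemma union_bound (Q : nat -> nat -> bool) (r s : seq nat) :
  count (fun x => has (Q x) r) s <= sumn [seq count (Q^~ c) s | c <- r].
Proof.
elim: r => [|c r IH] /=; first by rewrite count_pred0.
apply: leq_trans (leq_add (leqnn _) IH).
rewrite -count_predUI; apply: leq_trans (leq_addr _ _).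
by apply: sub_count => x /=.
Qed.

Lemma sumn_bound (h : nat -> nat) m r : (forall c, c \in r -> h c <= m) ->
  sumn [seq h c | c <- r] <= size r * m.
Proof.
elim: r => [|c r IH] //= hb; rewrite mulSn leq_add //; first by apply: hb; rewrite inE eqxx.
by apply: IH => d dr; apply: hb; rewrite inE dr orbT.
Qed.

Lemma count_window m c s : uniq s -> count (fun x => (x < c) && (c <= x + m)) s <= m.
Proof.
move=> us; rewrite -size_filter.
apply: leq_trans (_ : size (iota (c - m) (c - (c - m))) <= m); last by rewrite size_iota; slia.
apply: uniq_leq_size; first by rewrite filter_uniq.
by move=> x; rewrite mem_filter mem_iota => /andP[/andP[h1 h2] _]; slia.
Qed.

Lemma Sstar_size m (I : seq nat) lo hi : uniq I -> lo \in I -> (forall c, c \in I -> lo <= c) ->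
  hi - lo + 1 - (size I - 1) * m <= size (Sstar m I lo hi).
Proof.
move=> uI loI lomin.
rewrite /Sstar size_filter.
have hc := count_predC (good m I) (iota lo (hi - lo + 1)); rewrite size_iota in hc.
suff : count (predC (good m I)) (iota lo (hi - lo + 1)) <= (size I - 1) * m by slia.
apply: leq_trans (_ : count (fun x => has (fun c => (x < c) && (c <= x + m)) I) (iota lo (hi - lo + 1)) <= _).
  by apply: sub_count => x /=; rewrite /good negb_or negbK => /andP[].
apply: leq_trans (union_bound _ _ _) _.
rewrite (perm_sumn (perm_map _ (perm_to_rem loI))) /=.
have -> : count (fun x => (x < lo) && (lo <= x + m)) (iota lo (hi - lo + 1)) = 0.
  apply/eqP; rewrite -leqn0 leqNgt -has_count; apply/hasP => -[x].
  by rewrite mem_iota => /andP[h1 _] /andP[h2 _]; slia.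
rewrite add0n; apply: leq_trans (sumn_bound (m := m) _) _.
  by move=> c _; apply: count_window; exact: iota_uniq.
by rewrite size_rem // subn1.
Qed.


Record hyps (n m : nat) (I : seq nat) (lo hi : nat) : Prop := Hyps {
  h_m : 0 < m;
  h_loI : lo \in I;
  h_hiI : hi \in I;
  h_lomin : forall c, c \in I -> lo <= c;
  h_himax : forall c, c \in I -> c <= hi;
  h_lo0 : 0 < lo;
  h_hin : hi <= n;
  h_lom : lo <= m.+1;
  h_him : n <= hi + m;
  h_far : forall a b, a \in I -> b \in I -> a < b -> a + m < b }.


Lemma memS0 m I lo hi z : lo <= hi -> (z \in Sstar m I lo hi) = [&& lo <= z, z <= hi & good m I z].
Proof. move=> lh; rewrite /Sstar mem_filter mem_iota andbC; case: (good m I z); rewrite /= ?andbF ?andbT //; slia. Qed.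

Lemma memS n m I lo hi z : hyps n m I lo hi -> (z \in Sstar m I lo hi) = [&& lo <= z, z <= hi & good m I z].
Proof. by move=> H; apply: memS0; apply: (h_lomin H); apply: h_hiI H. Qed.

Lemma Ssorted m I lo hi : sorted ltn (Sstar m I lo hi).
Proof. by apply: sorted_filter; [exact: ltn_trans|exact: iota_ltn_sorted]. Qed.

Lemma Suniq m I lo hi : uniq (Sstar m I lo hi).
Proof. by rewrite filter_uniq // iota_uniq. Qed.

Lemma goodI m I c : c \in I -> good m I c.
Proof. by rewrite /good => ->. Qed.

Lemma ISsub n m I lo hi : hyps n m I lo hi -> forall c, c \in I -> c \in Sstar m I lo hi.
Proof. move=> H c cI; rewrite (memS _ H) goodI // andbT; apply/andP; split; [exact: h_lomin H _ cI|exact: h_himax H _ cI]. Qed.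

Lemma domS n m I lo hi x y : x \in Sstar m I lo hi ->
  dom n m (Sstar m I lo hi) (index x (Sstar m I lo hi)) y =
  has (fun z => (z < x) && inN n m z y) (Sstar m I lo hi).
Proof.
move=> xS; apply/domP/hasP => -[z zS /andP[h1 h2]]; exists z => //.
  by rewrite -(sorted_index_lt (Ssorted _ _ _ _) zS xS) h1.
by rewrite (sorted_index_lt (Ssorted _ _ _ _) zS xS) h1.
Qed.

Lemma privI n m I lo hi x : hyps n m I lo hi -> x \in I ->
  ~~ dom n m (Sstar m I lo hi) (index x (Sstar m I lo hi)) x.
Proof.
move=> H xI; rewrite domS; last exact: ISsub H _ xI.
apply/hasP => -[z]; rewrite (memS _ H) => /and3P[_ _ gz] /andP[zx]; rewrite inNE => /and4P[_ _ _ h].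
case/orP: gz => [zI|/hasP []].
  by have := h_far H zI xI zx; slia.
by exists x => //; apply/andP; split; slia.
Qed.

Lemma nI_lt n m I lo hi x : hyps n m I lo hi -> x \in Sstar m I lo hi -> x \notin I -> x + m < hi.
Proof.
move=> H; rewrite (memS _ H) => /and3P[h1 h2 gx] xI.
move: gx; rewrite /good (negbTE xI) /= => /hasP hh.
case: (ltnP (x + m) hi) => // c; case: hh; exists hi; first exact: h_hiI H.
apply/andP; split => //.
case: (ltngtP x hi) => // e; [slia|by move: xI; rewrite e (h_hiI H)].
Qed.

Lemma privnI n m I lo hi x : hyps n m I lo hi -> x \in Sstar m I lo hi -> x \notin I ->
  inPN n m (Sstar m I lo hi) (index x (Sstar m I lo hi)) (x + m).
Proof.
move=> H xS xI; have := nI_lt H xS xI => lt.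
have hn := h_hin H; have lo0 := h_lo0 H.
have := xS; rewrite (memS _ H) => /and3P[h1 h2 _].
rewrite inPNE nth_index // domS // inNE; apply/andP; split.
  apply/and4P; split; slia.
apply/hasP => -[z _ /andP[zx]]; rewrite inNE => /and4P[_ _ _ h]; slia.
Qed.

Lemma domnI n m I lo hi x : hyps n m I lo hi -> x \in Sstar m I lo hi -> x \notin I ->
  dom n m (Sstar m I lo hi) (index x (Sstar m I lo hi)) x.
Proof.
move=> H xS xI; rewrite domS //.
have := xS; rewrite (memS _ H) => /and3P[h1 h2 gx].
have hn := h_hin H; have lo0 := h_lo0 H; have hm := h_m H.
have xlo : lo < x by case: (ltngtP lo x) => // e; [slia|move: xI; rewrite -e (h_loI H)].
apply/hasP; exists x.-1.
  rewrite (memS _ H); apply/and3P; split; try slia.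
  rewrite /good; case: (x.-1 \in I) => //=.
  move: gx; rewrite /good (negbTE xI) /= => /hasP hh; apply/hasP => -[c cI /andP[c1 c2]].
  case: hh; exists c => //; apply/andP; split; last slia.
  case: (ltngtP x c) => // e; [slia|by move: xI; rewrite e cI].
by apply/andP; split; [slia|rewrite inNE; apply/and4P; split; slia].
Qed.

Lemma maxgood n m I lo hi : hyps n m I lo hi -> forall d, lo + d <= hi ->
  exists z, [/\ z \in Sstar m I lo hi, z <= lo + d &
    forall w, z < w -> w <= lo + d -> ~~ good m I w].
Proof.
move=> H; elim=> [|d IH] hd.
  exists lo; split; first exact: ISsub H _ (h_loI H).
    by rewrite addn0.
  by move=> w; slia.
have hd' : lo + d <= hi by slia.
have [z [zS zl hw]] := IH hd'.
case g: (good m I (lo + d.+1)).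
  exists (lo + d.+1); split => //; last by move=> w; slia.
  rewrite (memS _ H) g andbT; apply/andP; split; slia.
exists z; split => //; first slia.
move=> w zw wl; case: (ltngtP w (lo + d.+1)) => e.
- by apply: hw => //; slia.
- slia.
- by rewrite e g.
Qed.

Lemma coverS n m I lo hi : hyps n m I lo hi -> forall y, 0 < y -> y <= n ->
  has (fun z => inN n m z y) (Sstar m I lo hi).
Proof.
move=> H y y0 yn.
have hn := h_hin H; have lo0 := h_lo0 H; have hm := h_m H; have hlo := h_lom H; have hhi := h_him H.
have lohi := h_lomin H (h_hiI H).
case: (ltnP y lo) => c1.
  apply/hasP; exists lo; first exact: ISsub H _ (h_loI H).
  rewrite inNE; apply/and4P; split; slia.
case: (ltnP hi y) => c2.
  apply/hasP; exists hi; first exact: ISsub H _ (h_hiI H).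
  rewrite inNE; apply/and4P; split; slia.
have hd : lo + (y - lo) <= hi by slia.
have [z [zS zl hw]] := maxgood H hd.
have zle : z <= y by slia.
apply/hasP; exists z => //; rewrite inNE; apply/and4P; split; try slia.
case: (leqP (y - z) m) => // c3.
have hz1 : z.+1 <= lo + (y - lo) by slia.
have := hw z.+1 (ltnSn _) hz1; rewrite /good negb_or negbK => /andP[_ /hasP[c cI /andP[q1 q2]]].
have hc1 : z < c by slia.
have hc2 : c <= lo + (y - lo) by slia.
by have := hw c hc1 hc2; rewrite goodI.
Qed.


Lemma Svert n m I lo hi z : hyps n m I lo hi -> z \in Sstar m I lo hi -> (0 < z) && (z <= n).
Proof.
move=> H; rewrite (memS _ H) => /and3P[h1 h2 _].
have := h_lo0 H; have := h_hin H; move=> *; apply/andP; split; slia.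
Qed.

Lemma Slegal n m I lo hi : hyps n m I lo hi -> legal n m (Sstar m I lo hi).
Proof.
move=> H; apply/and4P; split.
- exact: Suniq.
- by apply/allP => z zS; rewrite is_vertE (Svert H zS).
- apply/allP => x; rewrite mem_vert => /andP[x0 xn]; by apply: (coverS H).
- apply/allP => i; rewrite mem_iota add0n /= => hi'.
  set S := Sstar m I lo hi in hi' *.
  have xS : nth 0 S i \in S by rewrite mem_nth.
  have ei : index (nth 0 S i) S = i by rewrite index_uniq // Suniq.
  set x := nth 0 S i in xS ei *.
  have /andP[x0 xn] := Svert H xS.
  case xI: (x \in I).
    apply/hasP; exists x; first by rewrite mem_vert x0 xn.
    rewrite inPNE -ei nth_index // privI // andbT inNE subnn x0 xn; by [].
  have := privnI H xS (negbT xI); rewrite ei => hp.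
  apply/hasP; exists (x + m) => //.
  have := nI_lt H xS (negbT xI); have := h_hin H => *.
  rewrite mem_vert; apply/andP; split; slia.
Qed.

Lemma SIS n m I lo hi : hyps n m I lo hi -> IS_eq n m (Sstar m I lo hi) I.
Proof.
move=> H; apply/andP; split.
  apply/allP => c cI; rewrite is_vertE; apply: (Svert H); exact: (ISsub H).
apply/allP => v; rewrite mem_vert => /andP[v0 vn].
rewrite /inIS is_vertE v0 vn /=.
set S := Sstar m I lo hi.
case vS: (v \in S).
  rewrite fp_eq //; last exact: Suniq.
  rewrite inPNE nth_index // inNE subnn v0 vn /=.
  case vI: (v \in I); first by rewrite privI.
  by rewrite domnI // vI.
have vI : v \notin I by apply/negP => /(ISsub H) ; rewrite vS.
rewrite (negbTE vI); apply/eqP/eqP => e.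
rewrite fpE in e.
case: (ltnP (idx n m S v) (size S)) => c.
  by move: (mem_nth 0 c); rewrite e vS.
by move: e; rewrite nth_default // => e; rewrite -e in v0.
Qed.


Lemma arr_mem k (r s : seq nat) : uniq r -> uniq s -> size s <= k -> {subset s <= r} ->
  s \in arrangements k r.
Proof.
elim: k r s => [|k IH] r s ur us sk sr.
  by case: s sk us sr => [|//] _ _ _; rewrite inE.
case: s sk us sr => [|x s] sk us sr; first by rewrite inE.
rewrite /= inE /=; apply/flatten_mapP; exists x; first by apply: sr; rewrite inE eqxx.
apply/mapP; exists s => //.
move: us => /= /andP[xs us].
apply: IH => //; first exact: rem_uniq.
move=> y ys; rewrite (mem_rem_uniq _ ur) /= ; apply/andP; split.
  by apply/negP => /eqP e; move: xs; rewrite -e ys.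
by apply: sr; rewrite inE ys orbT.
Qed.

Lemma gammaE n m I : gamma_gr n m I =
  (let L := [seq size s | s <- arrangements n (vert n) & legal n m s && IS_eq n m s I] in
   if L is [::] then None else Some (\max_(k <- L) k)).
Proof. by []. Qed.

Lemma max_eq (L : seq nat) v : v \in L -> (forall x, x \in L -> x <= v) ->
  (if L is [::] then None else Some (\max_(k <- L) k)) = Some v.
Proof.
case: L => [//|a l] vin hb; congr Some; apply/eqP; rewrite eqn_leq; apply/andP; split.
  by apply/bigmax_leqP_seq => i iL _; apply: hb.
exact: (leq_bigmax_seq (F := id) v vin).
Qed.

Lemma part1 n m I : 0 < m -> m + 2 <= n -> in_tildeI n m I ->
  gamma_gr n m I = Some (seq_max I - seq_min I + 1 - (size I - 1) * m).
Proof.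
move=> hm hmn hT.
have := hT => /and4P[hind ne hlo hhi].
have uI : uniq I by case/and3P: hind.
have [lo_in lo_min] := seq_min_prop ne.
have [hi_in hi_max] := seq_max_prop ne.
have vI : forall c, c \in I -> (0 < c) && (c <= n).
  by case/and3P: hind => _ /allP h _ c /h.
have H : hyps n m I (seq_min I) (seq_max I).
  have /andP[l0 _] := vI _ lo_in; have /andP[_ hn] := vI _ hi_in.
  by split => //; [slia|exact: indep_far hind].
rewrite gammaE /=; apply: max_eq.
  apply/mapP; exists (Sstar m I (seq_min I) (seq_max I)); last first.
    apply/eqP; rewrite eqn_leq Sstar_size //=.
    exact: U2 (Slegal H) (SIS H) hT.
  rewrite mem_filter (Slegal H) (SIS H) /=.
  apply: arr_mem; [exact: iota_uniq|exact: Suniq| |].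
    rewrite -(size_iota 1 n); apply: uniq_leq_size; first exact: Suniq.
    by move=> z zS; rewrite -/(vert n) mem_vert (Svert H zS).
  by move=> z zS; rewrite mem_vert (Svert H zS).
move=> x /mapP[s]; rewrite mem_filter => /andP[/andP[hL hI] _] ->.
exact: U2 hL hI hT.
Qed.

Lemma tilde1n n m : 0 < m -> m + 2 <= n -> in_tildeI n m [:: 1; n].
Proof.
move=> hm hmn; apply/and4P; split => //.
- rewrite /independent /= /adj /is_vert /= !inE !eqxx /=.
  have -> : (1 == n) = false by apply/eqP; slia.
  have -> : (n == 1) = false by apply/eqP; slia.
  have -> : (n - 1 <= m) = false by apply/negP; slia.
  by rewrite !andbF /= andbT; slia.
- by rewrite /seq_min /=; slia.
- by rewrite /seq_max !big_cons big_nil; slia.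
Qed.

Unset Implicit Arguments.

Theorem lemma6 (n m : nat) (hm : 0 < m) (hmn : m + 2 <= n) :
  (forall I : seq nat, in_tildeI n m I ->
     gamma_gr n m I = Some (seq_max I - seq_min I + 1 - (size I - 1) * m)) /\
  (forall I : seq nat, independent n m I -> I != [::] ->
     exists I' : seq nat, in_tildeI n m I' /\ le_ext (gamma_gr n m I) (gamma_gr n m I')).
Proof.
split; first by move=> I; apply: part1.
move=> I _ _; exists [:: 1; n]; split; first exact: tilde1n.
rewrite (part1 hm hmn (tilde1n hm hmn)).
have -> : seq_max [:: 1; n] - seq_min [:: 1; n] + 1 - (size [:: 1; n] - 1) * m = n - m.
  by rewrite /seq_max /seq_min !big_cons big_nil /=; slia.
rewrite gammaE /=.
set L := [seq size s | s <- _ & _].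
have hb : forall x, x \in L -> x <= n - m.
  move=> x /mapP[s]; rewrite mem_filter => /andP[/andP[hL _] _] ->.
  by apply: U1 hL _; slia.
case: L hb => [|a l] hb //=.
by apply/bigmax_leqP_seq => x xL _; apply: hb.
Qed.
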